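(* For every positive integer $n$, $$\big((\mathrm{Id}\cdot\mu)\ast\delta\big)(n)=-\big(\mathrm{Id}\ast(\mu\delta)\big)(n),$$ where $\mathrm{Id}\cdot\mu$ is $n\mapsto n\mu(n)$ and $\mu\delta$ is the pointwise product.
   Context: The arithmetic derivative $\delta$ is defined by $\delta(p)=1$ for every prime $p$ and $\delta(mn)=m\delta(n)+n\delta(m)$ for all positive integers $m,n$; equivalently $\delta(1)=0$ and $\delta(n)=n\sum_{p^\alpha\| n}\alpha/p$. $\mathrm{Id}(n)=n$, $\mu$ is the Möbius function. The Dirichlet convolution is $(u\ast v)(n)=\sum_{d\mid n}u(d)v(n/d)$. *)

(* Defs.v *)
From mathcomp Require Import all_boot all_order all_algebra.
Set Implicit Arguments. Unset Strict Implicit. Unset Printing Implicit Defensive.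
Import GRing.Theory Num.Theory.
Local Open Scope ring_scope.

(* Arithmetic derivative: delta(n) = n * sum_{p^a || n} a/p = sum_{p | n} a * (n/p).
   delta 1 = 0 (primes 1 = [::]); value at 0 is irrelevant (positive n only). *)
Definition arith_deriv (n : nat) : nat :=
  (\sum_(p <- primes n) logn p n * (n %/ p))%N.

(* Moebius function: 0 if some p^2 | n, else (-1)^(number of prime factors). *)
Definition moebius (n : nat) : int :=
  if [forall p : 'I_n.+1, (p.+1 ^ 2 %| n)%N ==> (p == 0%N :> nat)]
  then (-1) ^+ size (primes n) else 0.

Definition dconv (u v : nat -> int) (n : nat) : int :=
  \sum_(d <- divisors n) u d * v (n %/ d)%N.

Definition IdF (n : nat) : int := n%:Z.

(* Main.v *)
Require Import Defs.
From mathcomp Require Import all_boot all_order all_algebra ring.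
Import GRing.Theory Num.Theory.

Lemma adE n s : uniq s -> {subset primes n <= s} ->
  arith_deriv n = (\sum_(p <- s) logn p n * (n %/ p))%N.
Proof.
move=> us sub; rewrite (bigID (mem (primes n))) /=.
rewrite [X in (_ + X)%N]big1 ?addn0; last first.
  by move=> p /negbTE pn; rewrite -logn_gt0 in pn; move: pn; case: (logn p n).
rewrite -big_filter /arith_deriv; apply: perm_big.
apply: uniq_perm; rewrite ?primes_uniq ?filter_uniq // => p.
rewrite mem_filter; case pn: (p \in primes n) => //=; by rewrite sub.
Qed.

Lemma ad_mul a b : (0 < a)%N -> (0 < b)%N ->
  arith_deriv (a * b) = (a * arith_deriv b + b * arith_deriv a)%N.
Proof.
move=> a0 b0.
have sa : {subset primes a <= primes (a * b)}.
  by move=> p; rewrite !mem_primes muln_gt0 a0 b0 /= => /andP[-> /dvdn_mulr ->].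
have sb : {subset primes b <= primes (a * b)}.
  by move=> p; rewrite !mem_primes muln_gt0 a0 b0 /= => /andP[-> /dvdn_mull ->].
rewrite (@adE _ _ (primes_uniq (a * b)) (fun _ x => x)).
rewrite (@adE _ _ (primes_uniq (a * b)) sa) (@adE _ _ (primes_uniq (a * b)) sb).
rewrite !big_distrr -big_split /=; apply: eq_bigr => p _.
rewrite lognM // mulnDl addnC; congr (_ + _)%N.
  have [pb|npb] := boolP (p %| b); first by rewrite -muln_divA // mulnCA.
  have -> : logn p b = 0%N by apply/eqP; rewrite -leqn0 leqNgt logn_gt0 mem_primes b0 (negbTE npb) !andbF.
  by rewrite !(muln0, mul0n).
have [pa|npa] := boolP (p %| a); first by rewrite -divn_mulAC // mulnA mulnC.
have -> : logn p a = 0%N by apply/eqP; rewrite -leqn0 leqNgt logn_gt0 mem_primes a0 (negbTE npa) !andbF.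
by rewrite !(muln0, mul0n).
Qed.
Definition sqf m := all (fun q => logn q m < 2) (primes m).

Lemma moebiusE m : 0 < m ->
  moebius m = if sqf m then ((-1) ^+ size (primes m))%R else 0%R.
Proof.
move=> m0; rewrite /moebius; congr (if _ then _ else _).
apply/idP/idP.
- move/forallP=> H; apply/allP => q qm; rewrite ltnNge; apply/negP => le2.
  have pq : prime q by move: qm; rewrite mem_primes => /andP[].
  have qd : q %| m by move: qm; rewrite mem_primes => /and3P[].
  have lt : q.-1 < m.+1 by rewrite ltnS (leq_trans (leq_pred _)) // dvdn_leq.
  move: (H (Ordinal lt)) => /=; rewrite prednK ?prime_gt0 // (pfactor_dvdn 2 pq m0) le2 /=.
  by move/eqP=> q1; have := prednK (prime_gt0 pq); rewrite q1 => qq; rewrite -qq in pq.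
- move/allP=> H; apply/forallP => k; apply/implyP => kd.
  apply: contraT; rewrite -lt0n => k0; exfalso.
  have k1 : 1 < k.+1 by rewrite ltnS.
  set q := pdiv k.+1.
  have pq : prime q by apply: pdiv_prime.
  have qd : q ^ 2 %| m.
    by apply: dvdn_trans kd; rewrite dvdn_exp2r // pdiv_dvd.
  have qm : q \in primes m.
    by rewrite mem_primes pq m0 /=; apply: dvdn_trans qd; rewrite expnS dvdn_mulr.
  by move: (H q qm); rewrite ltnNge -(pfactor_dvdn 2 pq m0) qd.
Qed.

Lemma moeb_mulp e p : prime p -> 0 < e -> p %| e -> moebius (e * p) = 0%R.
Proof.
move=> pp e0 pe; rewrite moebiusE ?muln_gt0 ?e0 ?prime_gt0 //.
have -> : sqf (e * p) = false => //.
apply/negbTE/allPn; exists p.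
  by rewrite mem_primes pp muln_gt0 e0 prime_gt0 // dvdn_mull.
by rewrite -leqNgt lognM ?(prime_gt0 pp) // (logn_prime p pp) eqxx addn1 ltnS logn_gt0 mem_primes pp e0 pe.
Qed.

Lemma moeb_mulnp e p : prime p -> 0 < e -> ~~ (p %| e) -> moebius (e * p) = (- moebius e)%R.
Proof.
move=> pp e0 npe.
have ep0 : 0 < e * p by rewrite muln_gt0 e0 prime_gt0.
have pe : perm_eq (primes (e * p)) (p :: primes e).
  apply: uniq_perm; rewrite ?primes_uniq //=.
    by rewrite primes_uniq andbT mem_primes (negbTE npe) !andbF.
  move=> q; rewrite in_cons !mem_primes ep0 e0 /=.
  case pq: (prime q) => //=; last by case: eqP => // qp; rewrite qp pp in pq.
  by rewrite Euclid_dvdM // (dvdn_prime2 pq pp) orbC.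
rewrite !moebiusE // (perm_size pe) /=.
have -> : sqf (e * p) = sqf e.
  rewrite /sqf (perm_all _ pe) /= lognM ?(prime_gt0 pp) // (logn_prime p pp) eqxx.
  have -> : logn p e = 0 by apply/eqP; rewrite -leqn0 leqNgt logn_gt0 mem_primes (negbTE npe) !andbF.
  rewrite /=; apply: eq_in_all => q qe.
  have pq : prime q by move: qe; rewrite mem_primes => /andP[].
  rewrite lognM ?(prime_gt0 pp) // (logn_prime q pp).
  case: eqP => [qp|_]; last by rewrite addn0.
  by move: qe; rewrite qp mem_primes (negbTE npe) !andbF.
by case: (sqf e); rewrite ?oppr0 // exprS mulN1r.
Qed.

Lemma moeb_sum n : 1 < n -> (\sum_(d <- divisors n) moebius d)%R = 0%R.
Proof.
move=> n1; set p := pdiv n.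
have pp : prime p by apply: pdiv_prime.
have pn : p %| n by apply: pdiv_dvd.
have n0 : 0 < n by apply: ltnW.
have p0 : 0 < p by apply: prime_gt0.
set m := n %/ p.
have nm : n = m * p by rewrite divnK.
have m0 : 0 < m by move: n0; rewrite nm muln_gt0 => /andP[].
have cop d : ~~ (p %| d) -> coprime d p by move=> h; rewrite coprime_sym prime_coprime.
have pe : perm_eq (divisors n)
    ([seq d <- divisors n | ~~ (p %| d)] ++ map (fun e => e * p) (divisors m)).
  apply: uniq_perm; first exact: divisors_uniq.
    rewrite cat_uniq filter_uniq ?divisors_uniq //= map_inj_uniq ?divisors_uniq //;
      last by move=> x y /eqP; rewrite eqn_pmul2r // => /eqP.
    rewrite andbT; apply/hasPn => x /mapP[e _ ->].
    by rewrite mem_filter dvdn_mull.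
  move=> d; rewrite mem_cat mem_filter -!dvdn_divisors //.
  have [pd|npd] /= := boolP (p %| d).
    apply/idP/mapP => [dn|[e em ->]].
      exists (d %/ p); last by rewrite divnK.
      by rewrite -dvdn_divisors // -(dvdn_pmul2r p0) divnK // -nm.
    by rewrite nm dvdn_pmul2r // dvdn_divisors.
  rewrite orbC; case: mapP => // [[e _ de]].
  by move: npd; rewrite de dvdn_mull.
rewrite (perm_big _ pe) big_cat /= big_map big_filter.
rewrite (bigID (fun e => p %| e) _ (fun e => moebius (e * p))) /=.
have -> : (\sum_(i <- divisors m | (p %| i)%N) moebius (i * p) = 0)%R.
  rewrite big_seq_cond; apply: big1 => e /andP[]; rewrite -dvdn_divisors // => em pe'.
  by apply: moeb_mulp => //; apply: dvdn_gt0 em.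
rewrite add0r.
have -> : (\sum_(i <- divisors m | ~~ (p %| i)%N) moebius (i * p) =
   \sum_(i <- divisors m | ~~ (p %| i)%N) - moebius i)%R.
  rewrite !(big_seq_cond (fun i => ~~ _)); apply: eq_bigr => e /andP[]; rewrite -dvdn_divisors // => em npe.
  by apply: moeb_mulnp => //; apply: dvdn_gt0 em.
rewrite sumrN -!(big_filter (divisors _)); apply/eqP; rewrite subr_eq0; apply/eqP.
apply: perm_big; apply: uniq_perm; rewrite ?filter_uniq ?divisors_uniq // => d.
rewrite !mem_filter -!dvdn_divisors //; have [pd|npd] //= := boolP (p %| d).
by rewrite nm Gauss_dvdl ?cop.
Qed.

Lemma div_rev n (F : nat -> int) : 0 < n ->
  (\sum_(d <- divisors n) F d = \sum_(d <- divisors n) F (n %/ d)%N)%R.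
Proof.
move=> n0; rewrite -(big_map (fun d => n %/ d) xpredT F).
have inv d : d \in divisors n -> n %/ (n %/ d) = d.
  by rewrite -dvdn_divisors // => dn; rewrite divnA // mulKn.
apply: perm_big; apply: uniq_perm; rewrite ?divisors_uniq //.
  rewrite map_inj_in_uniq ?divisors_uniq // => x y xn yn e.
  by rewrite -(inv x xn) e inv.
move=> d; apply/idP/mapP => [dn|[e en ->]].
  exists (n %/ d); last by rewrite inv.
  by rewrite -dvdn_divisors ?dvdn_div // dvdn_divisors.
by rewrite -dvdn_divisors ?dvdn_div // dvdn_divisors.
Qed.

Local Open Scope ring_scope.

Theorem corollary2p6 (n : nat) : (0 < n)%N ->
  dconv (fun m => m%:Z * moebius m) (fun m => (arith_deriv m)%:Z) n =
  - dconv IdF (fun m => moebius m * (arith_deriv m)%:Z) n.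
Proof.
move=> n0; apply/eqP; rewrite -addr_eq0; apply/eqP.
rewrite /dconv /IdF [X in _ + X](@div_rev _ _ n0) -big_split /=.
have -> : \sum_(i <- divisors n) ((i%:Z * moebius i) * (arith_deriv (n %/ i))%:Z +
     (n %/ i)%:Z * (moebius (n %/ (n %/ i)) * (arith_deriv (n %/ (n %/ i)))%:Z))
   = \sum_(i <- divisors n) (arith_deriv n)%:Z * moebius i.
  rewrite big_seq [RHS]big_seq; apply: eq_bigr => d; rewrite -dvdn_divisors // => dn.
  have d0 : (0 < d)%N by apply: dvdn_gt0 dn.
  have nd0 : (0 < n %/ d)%N by rewrite divn_gt0 // dvdn_leq.
  rewrite divnA // mulKn // -{3}(divnK dn) mulnC ad_mul // PoszD !PoszM.
  ring.
rewrite -big_distrr /=.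
case: (ltngtP n 1) => [|n1|->]; first by rewrite ltnS leqn0 => /eqP n00; rewrite n00 in n0.
  by rewrite moeb_sum // mulr0.
have -> : arith_deriv 1 = 0%N by rewrite /arith_deriv big_nil.
by rewrite mul0r.
Qed.
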